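(* For all real numbers $r,k$, the map $f(x)=x^2\exp(r-x)+k$, $x\in\mathbb{R}$, has negative Schwarzian derivative, i.e. \[ Sf(x)=\frac{f'''(x)}{f'(x)}-\frac{3}{2}\left(\frac{f''(x)}{f'(x)}\right)^2<0 \] for every $x\in\mathbb{R}$ with $f'(x)\neq 0$ (that is, for every $x\notin\{0,2\}$). *)

(* Defs.v *)
From Stdlib Require Import Reals.
From Coquelicot Require Import Coquelicot.
Open Scope R_scope.

Definition schwarzian (f : R -> R) (x : R) : R :=
  Derive_n f 3 x / Derive f x - 3 / 2 * (Derive_n f 2 x / Derive f x) ^ 2.

(* Main.v *)
Require Import Defs.
From Stdlib Require Import Reals Lra Psatz.
From Coquelicot Require Import Coquelicot.
Open Scope R_scope.

Theorem proposition2p1 (r k : R) :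
  forall x : R,
    Derive (fun y => y ^ 2 * exp (r - y) + k) x <> 0 ->
    schwarzian (fun y => y ^ 2 * exp (r - y) + k) x < 0.
Proof.
  set (f := (fun y => y ^ 2 * exp (r - y) + k)).
  assert (D1 : forall y, Derive f y = exp (r - y) * (2*y - y^2)).
  { intro y. apply is_derive_unique. unfold f. auto_derive; [auto|unfold Rminus; ring]. }
  assert (D2 : forall y, Derive (Derive f) y = exp (r - y) * (2 - 4*y + y^2)).
  { intro y. rewrite (Derive_ext _ _ _ D1). apply is_derive_unique.
    auto_derive; [auto|unfold Rminus; ring]. }
  assert (D3 : forall y, Derive (Derive (Derive f)) y = exp (r - y) * (-6 + 6*y - y^2)).
  { intro y. rewrite (Derive_ext _ _ _ D2). apply is_derive_unique.
    auto_derive; [auto|unfold Rminus; ring]. }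
  intros x Hx. unfold schwarzian.
  change (Derive_n f 3 x) with (Derive (Derive (Derive f)) x).
  change (Derive_n f 2 x) with (Derive (Derive f) x).
  rewrite D3.
  rewrite D2. rewrite D1 in *.
  assert (He : 0 < exp (r - x)) by apply exp_pos.
  assert (Hp : 2*x - x^2 <> 0).
  { intro H. apply Hx. rewrite H. ring. }
  set (e := exp (r - x)) in *.
  assert (Hd : 0 < (2*x - x^2)^2) by (apply pow2_gt_0; auto).
  replace (e * (-6 + 6 * x - x ^ 2) / (e * (2 * x - x ^ 2)) -
   3 / 2 * (e * (2 - 4 * x + x ^ 2) / (e * (2 * x - x ^ 2))) ^ 2)
   with (- (1/2) * (((x-2)^2-2)^2 + 4*((x-2)+1)^2 + 4) / (2*x - x^2)^2)
   by (field; lra).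
  apply Rdiv_neg_pos; [|exact Hd].
  nra.
Qed.
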